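(* Let $S^0$ be an adequate transversal of a quasi-adequate semigroup $S$. If $x\in E(S)$ then $x^0\in E^0$. In particular, if $x\in I\cup\Lambda$ then $x^0\in E^0$.
   Context: For a semigroup $S$, $S^1$ is $S$ with an identity adjoined, $E(S)$ its idempotents, $\mathcal{L},\mathcal{R}$ Green's relations. $\mathcal{R}^\ast=\{(a,b):\forall x,y\in S^1,\ xa=ya\iff xb=yb\}$, $\mathcal{L}^\ast=\{(a,b):\forall x,y\in S^1,\ ax=ay\iff bx=by\}$. $S$ is abundant if each $\mathcal{R}^\ast$- and $\mathcal{L}^\ast$-class contains an idempotent; adequate if also idempotents commute (then $a^+$, $a^\ast$ are the unique idempotents $\mathcal{R}^\ast$-, resp. $\mathcal{L}^\ast$-related to $a$). Quasi-adequate: abundant with $E(S)$ a subsemigroup. An abundant subsemigroup $U$ of abundant $S$ is a $\ast$-subsemigroup if $\mathcal{L}^\ast(U)=\mathcal{L}^\ast(S)\cap(U\times U)$, $\mathcal{R}^\ast(U)=\mathcal{R}^\ast(S)\cap(U\times U)$. An adequate $\ast$-subsemigroup $S^0$ of abundant $S$ is an adequate transversal if each $x\in S$ has a unique $\overline{x}\in S^0$ and idempotents $e,f$ of $S$ (then unique, written $e_x,f_x$) with $x=e\overline{x}f$, $e\,\mathcal{L}\,\overline{x}^+$, $f\,\mathcal{R}\,\overline{x}^\ast$. $E^0=E(S^0)$, $I=\{e_x:x\in S\}$, $\Lambda=\{f_x:x\in S\}$. For a regular element $x$ of $S$, $x^0$ denotes the unique inverse of $x$ with $xx^0=e_x$ and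 $x^0x=f_x$ (it is the unique inverse of $x$ lying in $S^0$). *)

(* Defs.v *)
Set Implicit Arguments.

Section Semigroups.
Variable T : Type.
Variable mul : T -> T -> T.

Definition associative : Prop :=
  forall a b c, mul a (mul b c) = mul (mul a b) c.

Definition allT : T -> Prop := fun _ => True.

Definition idem (e : T) : Prop := mul e e = e.

(* S^1 (or U^1): [None] is the adjoined identity *)
Definition lmul1 (u : option T) (a : T) : T :=
  match u with None => a | Some x => mul x a end.
Definition rmul1 (a : T) (u : option T) : T :=
  match u with None => a | Some x => mul a x end.

Definition in1 (U : T -> Prop) (u : option T) : Prop :=
  match u with None => True | Some x => U x end.

Definition GreenL (a b : T) : Prop :=
  (exists u, a = lmul1 u b) /\ (exists v, b = lmul1 v a).
Definition GreenR (a b : T) : Prop :=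
  (exists u, a = rmul1 b u) /\ (exists v, b = rmul1 a v).

(* R^* and L^* computed in the subsemigroup U (U = allT gives those of S) *)
Definition RStar_in (U : T -> Prop) (a b : T) : Prop :=
  forall x y, in1 U x -> in1 U y -> (lmul1 x a = lmul1 y a <-> lmul1 x b = lmul1 y b).
Definition LStar_in (U : T -> Prop) (a b : T) : Prop :=
  forall x y, in1 U x -> in1 U y -> (rmul1 a x = rmul1 a y <-> rmul1 b x = rmul1 b y).

Definition subsemigroup (U : T -> Prop) : Prop :=
  forall a b, U a -> U b -> U (mul a b).

Definition abundant_in (U : T -> Prop) : Prop :=
  forall a, U a ->
    (exists e, U e /\ idem e /\ RStar_in U a e) /\
    (exists f, U f /\ idem f /\ LStar_in U a f).

Definition adequate_in (U : T -> Prop) : Prop :=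
  abundant_in U /\ forall e f, U e -> U f -> idem e -> idem f -> mul e f = mul f e.

Definition quasi_adequate : Prop :=
  abundant_in allT /\ forall e f, idem e -> idem f -> idem (mul e f).

Definition star_subsemigroup (U : T -> Prop) : Prop :=
  subsemigroup U /\ abundant_in U /\
  forall a b, U a -> U b ->
    (LStar_in U a b <-> LStar_in allT a b) /\ (RStar_in U a b <-> RStar_in allT a b).

(* x = e xbar f with xbar in U, e,f idempotents, e L xbar^+, f R xbar^*,
   where xbar^+ (resp. xbar^star) is the idempotent of U R-star (resp. L-star) related
   to xbar (unique since U is adequate). *)
Definition decomp (U : T -> Prop) (x xbar e f : T) : Prop :=
  U xbar /\ idem e /\ idem f /\ x = mul (mul e xbar) f /\
  (exists g, U g /\ idem g /\ RStar_in U xbar g /\ GreenL e g) /\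
  (exists h, U h /\ idem h /\ LStar_in U xbar h /\ GreenR f h).

Definition adequate_transversal (U : T -> Prop) : Prop :=
  star_subsemigroup U /\ adequate_in U /\
  forall x, (exists xbar e f, decomp U x xbar e f) /\
            (forall xbar e f xbar' e' f',
               decomp U x xbar e f -> decomp U x xbar' e' f' -> xbar = xbar').

Definition inI (U : T -> Prop) (e : T) : Prop := exists x xbar f, decomp U x xbar e f.
Definition inLambda (U : T -> Prop) (f : T) : Prop := exists x xbar e, decomp U x xbar e f.

Definition is_x0 (U : T -> Prop) (x y : T) : Prop :=
  U y /\ mul (mul x y) x = x /\ mul (mul y x) y = y /\
  exists xbar e f, decomp U x xbar e f /\ mul x y = e /\ mul y x = f.

End Semigroups.

(* Main.v *)
Require Import Defs.
From Stdlib Require Import Setoid.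

Lemma key_exists (T : Type) (mul : T -> T -> T) (S0 : T -> Prop)
  (Hassoc : associative mul)
  (Hqa : quasi_adequate mul)
  (Htr : adequate_transversal mul S0) (x : T) (Hx : idem mul x) :
  exists y, is_x0 mul S0 x y.
Proof.
  destruct Htr as [[Hsub [Hab Hstar]] [[_ Hcomm] Hdec]].
  destruct (Hdec x) as [[a [e [f D]]] _].
  pose proof D as D'.
  destruct D as [Ha [He [Hf [Hxe [[g [Hg [Hgi [HRg HLg]]]] [h [Hh [Hhi [HLh HRh]]]]]]]]].
  unfold idem in *.
  assert (eg : mul e g = e).
  { destruct HLg as [[u Hu] _]. destruct u; simpl in Hu.
    - rewrite Hu at 1. rewrite <- Hassoc, Hgi. symmetry; exact Hu.
    - subst e. exact Hgi. }
  assert (ge : mul g e = g).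
  { destruct HLg as [_ [u Hu]]. destruct u; simpl in Hu.
    - rewrite Hu at 1. rewrite <- Hassoc, He. symmetry; exact Hu.
    - rewrite <- Hu. exact Hgi. }
  assert (hf : mul h f = f).
  { destruct HRh as [[u Hu] _]. destruct u; simpl in Hu.
    - rewrite Hu at 1. rewrite Hassoc, Hhi. symmetry; exact Hu.
    - subst f. exact Hhi. }
  assert (fh : mul f h = h).
  { destruct HRh as [_ [u Hu]]. destruct u; simpl in Hu.
    - rewrite Hu at 1. rewrite Hassoc, Hf. symmetry; exact Hu.
    - rewrite <- Hu. exact Hhi. }
  assert (ga : mul g a = a).
  { exact (proj2 (HRg (Some g) None Hg I) Hgi). }
  assert (ah : mul a h = a).
  { exact (proj2 (HLh (Some h) None Hh I) Hhi). }
  pose proof (proj1 (proj2 (Hstar a g Ha Hg)) HRg) as HRgT.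
  pose proof (proj1 (proj1 (Hstar a h Ha Hh)) HLh) as HLhT.
  assert (afea : mul (mul (mul a f) e) a = a).
  { assert (A1 : a = mul (mul g (mul x x)) h).
    { rewrite Hx, Hxe, !Hassoc, ge, ga, <- (Hassoc _ f h), fh, ah. reflexivity. }
    rewrite A1 at 3. rewrite Hxe, !Hassoc, ge, ga, <- (Hassoc _ f h), fh, <- (Hassoc _ a h), ah. reflexivity. }
  assert (hfea : mul (mul f e) a = h).
  { assert (H1 : mul h (mul (mul f e) a) = h).
    { apply (proj1 (HLhT (Some (mul (mul f e) a)) None I I)). simpl.
      rewrite !Hassoc. exact afea. }
    rewrite !Hassoc, hf in H1. exact H1. }
  assert (gafe : mul (mul a f) e = g).
  { assert (H1 : mul (mul (mul a f) e) g = mul g g).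
    { apply (proj1 (HRgT (Some (mul (mul a f) e)) (Some g) I I)). simpl.
      rewrite afea, ga. reflexivity. }
    rewrite <- Hassoc, eg, Hgi in H1. exact H1. }
  assert (fei : mul (mul f e) (mul f e) = mul f e) by exact (proj2 Hqa f e Hf He).
  assert (agh : mul g h = a).
  { rewrite <- gafe, <- hfea.
    rewrite <- (Hassoc a f e), (Hassoc (mul a (mul f e)) (mul f e) a), <- (Hassoc a (mul f e) (mul f e)), fei,
      Hassoc. exact afea. }
  assert (ghc : mul g h = mul h g) by (apply Hcomm; assumption).
  assert (aa : mul a a = a).
  { rewrite <- agh at 1 2. rewrite Hassoc, <- (Hassoc g h g), <- ghc,
      (Hassoc g g h), Hgi, <- Hassoc, Hhi. exact agh. }
  assert (gEa : g = a).
  { assert (H1 : mul a g = g).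
    { exact (proj1 (HRgT (Some a) None I I) aa). }
    rewrite <- H1, <- agh, <- Hassoc, <- ghc, Hassoc, Hgi. reflexivity. }
  assert (hEa : h = a).
  { assert (H1 : mul h a = h).
    { exact (proj1 (HLhT (Some a) None I I) aa). }
    rewrite <- H1, <- agh, Hassoc, <- ghc, <- Hassoc, Hhi. reflexivity. }
  clear hfea gafe agh ghc HRg HLh HRgT HLhT. subst g h.
  assert (xa : mul x a = e).
  { rewrite Hxe, <- (Hassoc (mul e a) f a), fh, eg. exact eg. }
  assert (ax : mul a x = f).
  { rewrite Hxe, !Hassoc, ge, aa. exact hf. }
  exists a. split; [exact Ha|]. split; [|split].
  - rewrite xa, Hxe, !Hassoc, He. reflexivity.
  - rewrite ax. exact fh.
  - exists a, e, f. split; [exact D'|]. split; assumption.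
Qed.

Theorem corollary2p2 (T : Type) (mul : T -> T -> T) (S0 : T -> Prop)
  (Hassoc : associative mul)
  (Hqa : quasi_adequate mul)
  (Htr : adequate_transversal mul S0) :
  forall x : T,
    idem mul x \/ inI mul S0 x \/ inLambda mul S0 x ->
    (exists y, is_x0 mul S0 x y) /\
    (forall y, is_x0 mul S0 x y -> S0 y /\ idem mul y).
Proof.
  intros x Hx.
  assert (Hxi : idem mul x).
  { destruct Hx as [H | [[z [zb [f D]]] | [z [zb [e D]]]]].
    - exact H.
    - exact (proj1 (proj2 D)).
    - exact (proj1 (proj2 (proj2 D))). }
  split.
  - exact (@key_exists T mul S0 Hassoc Hqa Htr x Hxi).
  - intros y [Hy [Hxyx [Hyxy _]]]. split; [exact Hy|].
    unfold idem in *.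
    assert (E1 : y = mul (mul y x) (mul x y)).
    { rewrite Hassoc, <- (Hassoc y x x), Hxi. symmetry; exact Hyxy. }
    assert (I1 : mul (mul y x) (mul y x) = mul y x).
    { rewrite Hassoc, Hyxy. reflexivity. }
    assert (I2 : mul (mul x y) (mul x y) = mul x y).
    { rewrite Hassoc, Hxyx. reflexivity. }
    rewrite E1. exact (proj2 Hqa _ _ I1 I2).
Qed.
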